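(* The structure $(B_\infty,T,\cdot,\equiv,1,\sigma_1,\sigma_1^{-1})$ is a canonical model for the link axioms. That is: (i) it satisfies the link axioms; (ii) every element of $B_\infty$ is the interpretation of a closed term of the language (built from $1,\sigma,\bar\sigma$ using $\cdot$ and $T$); (iii) for every structure $(S,T_1,*,\equiv',1',\sigma_1',\bar\sigma_1')$ satisfying the link axioms there is a unique homomorphism of structures $f:B_\infty\to S$, i.e. a unique map with $f(1)=1'$, $f(\sigma_1)=\sigma_1'$, $f(\sigma_1^{-1})=\bar\sigma_1'$, $f(x\cdot y)=f(x)*f(y)$, $f(T(x))=T_1(f(x))$ for all $x,y$, and $x\equiv y\Rightarrow f(x)\equiv' f(y)$.
   Context: Consider a first-order language (with equality) with signature $(\cdot,T,\equiv,1,\sigma,\bar\sigma)$: $\cdot$ binary function, $T$ unary function, $\equiv$ binary predicate, constants $1,\sigma,\bar\sigma$. The link axioms are: $\forall x,y,z\ x\cdot(y\cdot z)=(x\cdot y)\cdot z$; $\forall x\ 1\cdot x=x$; $\forall x\ x\cdot 1=x$; $\sigma\cdot\bar\sigma=\bar\sigma\cdot\sigma=1$; $\forall x,y\ T(x\cdot y)=T(x)\cdot T(y)$; $T(1)=1$; $\sigma\cdot T(\sigma)\cdot\sigma=T(\sigma)\cdot\sigma\cdot T(\sigma)$; $\forall b\ \sigma\cdot T(T(b))=T(T(b))\cdot\sigma$; $\equiv$ is reflexive, symmetric and transitive; $\forall x,y,z\ (y\cdot z=1\to x\equiv y\cdot x\cdot z)$; $\forall x\ x\equiv\sigma\cdot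 T(x)$; $\forall x\ x\equiv\bar\sigma\cdot T(x)$. $B_\infty$ is the group generated by $\{\sigma_i\}_{i\in\mathbb{N}}$ with relations $\sigma_i\sigma_j=\sigma_j\sigma_i$ for $i\ge j+2$ and $\sigma_i\sigma_{i+1}\sigma_i=\sigma_{i+1}\sigma_i\sigma_{i+1}$; $T$ is the homomorphism of $B_\infty$ with $T(\sigma_i)=\sigma_{i+1}$; $\cdot$ is the group multiplication, $1$ the identity, and $\sigma,\bar\sigma$ are interpreted as $\sigma_1,\sigma_1^{-1}$; $\equiv$ on $B_\infty$ is the equivalence relation generated by $aba^{-1}\equiv b$, $b\equiv\sigma_1T(b)$, $b\equiv\sigma_1^{-1}T(b)$ for all $a,b\in B_\infty$. *)

(* Defs.v *)
From Stdlib Require Import List ClassicalEpsilon.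
Import ListNotations.
Set Implicit Arguments.

Definition link_axioms (S : Type) (mul : S -> S -> S) (T : S -> S)
  (eqv : S -> S -> Prop) (one sig sigb : S) : Prop :=
  (forall x y z, mul x (mul y z) = mul (mul x y) z) /\
  (forall x, mul one x = x) /\
  (forall x, mul x one = x) /\
  (mul sig sigb = one /\ mul sigb sig = one) /\
  (forall x y, T (mul x y) = mul (T x) (T y)) /\
  T one = one /\
  mul (mul sig (T sig)) sig = mul (mul (T sig) sig) (T sig) /\
  (forall b, mul sig (T (T b)) = mul (T (T b)) sig) /\
  (forall x, eqv x x) /\
  (forall x y, eqv x y -> eqv y x) /\
  (forall x y z, eqv x y -> eqv y z -> eqv x z) /\
  (forall x y z, mul y z = one -> eqv x (mul (mul y x) z)) /\
  (forall x, eqv x (mul sig (T x))) /\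
  (forall x, eqv x (mul sigb (T x))).

Inductive term : Type :=
| t_one | t_sig | t_sigb
| t_mul : term -> term -> term
| t_T : term -> term.

Fixpoint eval_term (S : Type) (mul : S -> S -> S) (T : S -> S)
  (one sig sigb : S) (t : term) : S :=
  match t with
  | t_one => one
  | t_sig => sig
  | t_sigb => sigb
  | t_mul a b => mul (eval_term mul T one sig sigb a) (eval_term mul T one sig sigb b)
  | t_T a => T (eval_term mul T one sig sigb a)
  end.

(* A letter (i, true) stands for sigma_{i+1}, (i, false) for sigma_{i+1}^{-1}:
   the generators are indexed by N = {1,2,...}, encoded with offset 1. *)
Definition letter := (nat * bool)%type.
Definition word := list letter.

Definition gen (i : nat) : word := [(i, true)].
Definition igen (i : nat) : word := [(i, false)].

Inductive brel : word -> word -> Prop :=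
| br_inv1 i : brel (gen i ++ igen i) []
| br_inv2 i : brel (igen i ++ gen i) []
| br_comm i j : j + 2 <= i -> brel (gen i ++ gen j) (gen j ++ gen i)
| br_braid i : brel (gen i ++ gen (S i) ++ gen i) (gen (S i) ++ gen i ++ gen (S i)).

Inductive weq : word -> word -> Prop :=
| weq_step u l r v : brel l r -> weq (u ++ l ++ v) (u ++ r ++ v)
| weq_refl w : weq w w
| weq_sym w1 w2 : weq w1 w2 -> weq w2 w1
| weq_trans w1 w2 w3 : weq w1 w2 -> weq w2 w3 -> weq w1 w3.

Definition Binf : Type := { P : word -> Prop | exists w, P = weq w }.

Definition cls (w : word) : Binf := exist _ (weq w) (ex_intro _ w eq_refl).

Definition repr (b : Binf) : word :=
  proj1_sig (constructive_indefinite_description _ (proj2_sig b)).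

Definition shift_letter (a : letter) : letter := (S (fst a), snd a).
Definition inv_letter (a : letter) : letter := (fst a, negb (snd a)).

Definition Bmul (a b : Binf) : Binf := cls (repr a ++ repr b).
Definition BT (a : Binf) : Binf := cls (map shift_letter (repr a)).
Definition Binv (a : Binf) : Binf := cls (rev (map inv_letter (repr a))).
Definition Bone : Binf := cls [].
Definition Bsig : Binf := cls (gen 0).
Definition Bsigb : Binf := cls (igen 0).

Inductive Beqv : Binf -> Binf -> Prop :=
| Beqv_conj a b : Beqv (Bmul (Bmul a b) (Binv a)) b
| Beqv_stab b : Beqv b (Bmul Bsig (BT b))
| Beqv_stabi b : Beqv b (Bmul Bsigb (BT b))
| Beqv_refl x : Beqv x x
| Beqv_sym x y : Beqv x y -> Beqv y x
| Beqv_trans x y z : Beqv x y -> Beqv y z -> Beqv x z.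

(* Main.v *)
Require Import Defs.
From Stdlib Require Import List ClassicalEpsilon Lia ProofIrrelevance
  FunctionalExtensionality PropExtensionality.
Import ListNotations.

Lemma weq_brel l r : brel l r -> weq l r.
Proof. intro H. pose proof (weq_step [] [] H) as H0. simpl in H0.
  rewrite !app_nil_r in H0. exact H0. Qed.

Lemma weq_app_r u v w : weq u v -> weq (u ++ w) (v ++ w).
Proof. induction 1.
- rewrite <- !app_assoc. now apply weq_step.
- apply weq_refl.
- now apply weq_sym.
- eapply weq_trans; eauto. Qed.

Lemma weq_app_l u v w : weq u v -> weq (w ++ u) (w ++ v).
Proof. induction 1.
- rewrite !app_assoc. rewrite <- (app_assoc (w ++ u) l), <- (app_assoc (w++u) r). now apply weq_step.
- apply weq_refl.
- now apply weq_sym.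
- eapply weq_trans; eauto. Qed.

Lemma weq_app u u' v v' : weq u u' -> weq v v' -> weq (u ++ v) (u' ++ v').
Proof. intros; eapply weq_trans. apply weq_app_r; eauto. apply weq_app_l; eauto. Qed.

Lemma brel_shift l r : brel l r -> brel (map shift_letter l) (map shift_letter r).
Proof. destruct 1; simpl.
- exact (br_inv1 (S i)).
- exact (br_inv2 (S i)).
- apply (br_comm (i:=S i) (S j) ltac:(lia)).
- exact (br_braid (S i)). Qed.

Lemma weq_shift u v : weq u v -> weq (map shift_letter u) (map shift_letter v).
Proof. induction 1.
- rewrite !map_app. apply weq_step. now apply brel_shift.
- apply weq_refl.
- now apply weq_sym.
- eapply weq_trans; eauto. Qed.

Lemma sig_eq {A} {P : A -> Prop} (a b : sig P) : proj1_sig a = proj1_sig b -> a = b.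
Proof. destruct a, b; simpl; intros ->; f_equal; apply proof_irrelevance. Qed.

Lemma cls_eq u v : weq u v -> cls u = cls v.
Proof. intro H. apply sig_eq; simpl. apply functional_extensionality; intro x.
  apply propositional_extensionality; split; intro.
  - eapply weq_trans; [apply weq_sym, H|]; auto.
  - eapply weq_trans; [apply H|]; auto. Qed.

Lemma cls_inj u v : cls u = cls v -> weq u v.
Proof. intro H. apply (f_equal (@proj1_sig _ _)) in H. simpl in H.
  assert (weq v u) by (rewrite <- H; apply weq_refl). now apply weq_sym. Qed.

Lemma repr_spec b : cls (repr b) = b.
Proof. destruct b as [P HP]. apply sig_eq. simpl. unfold repr. simpl.
  destruct (constructive_indefinite_description _ HP) as [w Hw]. simpl. auto. Qed.

Lemma repr_cls w : weq (repr (cls w)) w.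
Proof. apply cls_inj. apply repr_spec. Qed.

Lemma cls_surj b : exists w, b = cls w.
Proof. exists (repr b). symmetry; apply repr_spec. Qed.

Lemma Bmul_cls u v : Bmul (cls u) (cls v) = cls (u ++ v).
Proof. apply cls_eq, weq_app; apply repr_cls. Qed.

Lemma BT_cls u : BT (cls u) = cls (map shift_letter u).
Proof. apply cls_eq, weq_shift, repr_cls. Qed.

Lemma inv_r w : weq (w ++ rev (map inv_letter w)) [].
Proof. induction w as [|a w IH]; simpl. apply weq_refl.
  replace (a :: w ++ rev (map inv_letter w) ++ [inv_letter a]) with
    ([a] ++ (w ++ rev (map inv_letter w)) ++ [inv_letter a])
    by (simpl; now rewrite app_assoc).
  eapply weq_trans. apply weq_app_l, weq_app_r, IH. simpl.
  destruct a as [i []].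
  - exact (weq_step [] [] (br_inv1 i)).
  - exact (weq_step [] [] (br_inv2 i)). Qed.

Lemma inv_l w : weq (rev (map inv_letter w) ++ w) [].
Proof. induction w as [|a w IH]; simpl. apply weq_refl.
  replace ((rev (map inv_letter w) ++ [inv_letter a]) ++ a :: w) with
    (rev (map inv_letter w) ++ [inv_letter a; a] ++ w)
    by (now rewrite <- app_assoc).
  assert (Ha : weq [inv_letter a; a] []).
  { destruct a as [i []].
    - exact (weq_step [] [] (br_inv2 i)).
    - exact (weq_step [] [] (br_inv1 i)). }
  eapply weq_trans. apply weq_app_l. apply (weq_app_r _ [] w). exact Ha.
  simpl. exact IH. Qed.

Lemma Binv_r a : Bmul a (Binv a) = Bone.
Proof. unfold Bmul, Binv, Bone. apply cls_eq. eapply weq_trans.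
  apply weq_app_l, repr_cls. apply inv_r. Qed.

Lemma Binv_l a : Bmul (Binv a) a = Bone.
Proof. unfold Bmul, Binv, Bone. apply cls_eq. eapply weq_trans.
  apply weq_app_r, repr_cls. apply inv_l. Qed.

Lemma Bmul_assoc x y z : Bmul x (Bmul y z) = Bmul (Bmul x y) z.
Proof. destruct (cls_surj x) as [u ->], (cls_surj y) as [v ->], (cls_surj z) as [w ->].
  rewrite !Bmul_cls. now rewrite app_assoc. Qed.

Lemma Bmul_1l x : Bmul Bone x = x.
Proof. destruct (cls_surj x) as [u ->]. unfold Bone. now rewrite Bmul_cls. Qed.

Lemma Bmul_1r x : Bmul x Bone = x.
Proof. destruct (cls_surj x) as [u ->]. unfold Bone. rewrite Bmul_cls. now rewrite app_nil_r. Qed.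

Lemma comm_letter a : 2 <= fst a -> weq (gen 0 ++ [a]) ([a] ++ gen 0).
Proof. destruct a as [k []]; simpl; intro H.
- apply weq_sym. exact (weq_step [] [] (br_comm (i:=k) 0 ltac:(lia))).
- eapply weq_trans. apply weq_sym. exact (weq_step [] [(0,true);(k,false)] (br_inv2 k)).
  eapply weq_trans. exact (weq_step [(k,false)] [(k,false)] (br_comm (i:=k) 0 ltac:(lia))).
  exact (weq_step [(k,false);(0,true)] [] (br_inv1 k)). Qed.

Lemma comm_TT w : weq (gen 0 ++ map shift_letter (map shift_letter w))
                      (map shift_letter (map shift_letter w) ++ gen 0).
Proof. induction w as [|a w IH]; simpl. apply weq_refl.
  set (b := shift_letter (shift_letter a)).
  set (W := map shift_letter (map shift_letter w)) in *.
  change (weq ((gen 0 ++ [b]) ++ W) ([b] ++ (W ++ gen 0))).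
  eapply weq_trans. apply weq_app_r, comm_letter. unfold b; simpl; lia.
  simpl. apply (weq_app_l _ _ [b]). exact IH. Qed.

Lemma link_B : link_axioms Bmul BT Beqv Bone Bsig Bsigb.
Proof.
  repeat split.
  - apply Bmul_assoc.
  - apply Bmul_1l.
  - apply Bmul_1r.
  - unfold Bsig, Bsigb, Bone. rewrite Bmul_cls. apply cls_eq.
    exact (weq_step [] [] (br_inv1 0)).
  - unfold Bsig, Bsigb, Bone. rewrite Bmul_cls. apply cls_eq.
    exact (weq_step [] [] (br_inv2 0)).
  - intros x y. destruct (cls_surj x) as [u ->], (cls_surj y) as [v ->].
    rewrite Bmul_cls, !BT_cls, Bmul_cls. now rewrite map_app.
  - unfold Bone. rewrite BT_cls. reflexivity.
  - unfold Bsig. rewrite !BT_cls, !Bmul_cls. apply cls_eq.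
    exact (weq_step [] [] (br_braid 0)).
  - intros b. destruct (cls_surj b) as [u ->]. unfold Bsig.
    rewrite !BT_cls, !Bmul_cls. apply cls_eq, comm_TT.
  - apply Beqv_refl.
  - apply Beqv_sym.
  - apply Beqv_trans.
  - intros x y z H.
    assert (Hz : z = Binv y).
    { rewrite <- (Bmul_1l z), <- (Binv_l y), <- Bmul_assoc, H. apply Bmul_1r. }
    subst z. apply Beqv_sym, Beqv_conj.
  - apply Beqv_stab.
  - apply Beqv_stabi.
Qed.

Fixpoint it {A} (F : A -> A) (n : nat) (x : A) : A :=
  match n with 0 => x | S n => F (it F n x) end.

Lemma cls_iter i b : cls [(i, b)] = it BT i (cls [(0, b)]).
Proof. induction i; simpl. reflexivity. rewrite <- IHi, BT_cls. reflexivity. Qed.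

Fixpoint titer (n : nat) (t : term) : term :=
  match n with 0 => t | S n => t_T (titer n t) end.

Fixpoint tw (w : word) : term :=
  match w with
  | [] => t_one
  | (i, b) :: w => t_mul (titer i (if b then t_sig else t_sigb)) (tw w)
  end.

Lemma eval_titer n t : eval_term Bmul BT Bone Bsig Bsigb (titer n t) =
  it BT n (eval_term Bmul BT Bone Bsig Bsigb t).
Proof. induction n; simpl; congruence. Qed.

Lemma eval_tw w : eval_term Bmul BT Bone Bsig Bsigb (tw w) = cls w.
Proof. induction w as [|[i b] w IH]; simpl. reflexivity.
  rewrite IH, eval_titer. change ((i, b) :: w) with ([(i,b)] ++ w).
  rewrite <- Bmul_cls, cls_iter. destruct b; reflexivity. Qed.

Section Univ.
Variables (St : Type) (mul : St -> St -> St) (T1 : St -> St) (eqv : St -> St -> Prop)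
  (one sig sigb : St).
Hypothesis HL : link_axioms mul T1 eqv one sig sigb.

Definition gl (a : letter) : St := it T1 (fst a) (if snd a then sig else sigb).
Fixpoint g (w : word) : St :=
  match w with [] => one | a :: w => mul (gl a) (g w) end.

Lemma g_app u v : g (u ++ v) = mul (g u) (g v).
Proof. destruct HL as (Ha & H1l & _).
  induction u; simpl. now rewrite H1l. rewrite IHu. apply Ha. Qed.

Lemma it_mul n x y : it T1 n (mul x y) = mul (it T1 n x) (it T1 n y).
Proof. destruct HL as (_ & _ & _ & _ & HT & _).
  induction n; simpl. reflexivity. now rewrite IHn, HT. Qed.

Lemma it_one n : it T1 n one = one.
Proof. destruct HL as (_ & _ & _ & _ & _ & HT1 & _).
  induction n; simpl. reflexivity. now rewrite IHn. Qed.

Lemma it_add m n x : it T1 (m + n) x = it T1 m (it T1 n x).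
Proof. induction m; simpl; congruence. Qed.

Lemma it_S n x : it T1 (S n) x = it T1 n (T1 x).
Proof. replace (S n) with (n + 1) by lia. apply it_add. Qed.

Lemma g_brel l r : brel l r -> g l = g r.
Proof. destruct HL as (Ha & H1l & H1r & [Hss Hss'] & HT & HT1 & Hbr & Hc & _).
  destruct 1; simpl; unfold gl; simpl; rewrite ?H1r.
  - now rewrite <- it_mul, Hss, it_one.
  - now rewrite <- it_mul, Hss', it_one.
  - replace i with (j + S (S (i - j - 2))) by lia. rewrite it_add.
    rewrite <- !it_mul. f_equal. simpl. symmetry; apply Hc.
  - replace (T1 (it T1 i sig)) with (it T1 i (T1 sig)) by (symmetry; apply (it_S i sig)). rewrite !Ha, <- !it_mul. now rewrite Hbr.
Qed.

Lemma g_weq u v : weq u v -> g u = g v.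
Proof. induction 1; try congruence. rewrite !g_app. f_equal. f_equal. now apply g_brel. Qed.

Lemma g_shift w : g (map shift_letter w) = T1 (g w).
Proof. destruct HL as (_ & _ & _ & _ & HT & HT1 & _).
  induction w; simpl. auto. rewrite HT, IHw. reflexivity. Qed.

Definition fB (b : Binf) : St := g (repr b).

Lemma fB_cls w : fB (cls w) = g w.
Proof. apply g_weq, repr_cls. Qed.

Lemma fB_props :
  fB Bone = one /\ fB Bsig = sig /\ fB Bsigb = sigb /\
  (forall x y, fB (Bmul x y) = mul (fB x) (fB y)) /\
  (forall x, fB (BT x) = T1 (fB x)) /\
  (forall x y, Beqv x y -> eqv (fB x) (fB y)).
Proof.
  destruct HL as (Ha & H1l & H1r & _ & _ & _ & _ & _ & Hrf & Hsy & Htr & Hcj & Hst & Hsti).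
  assert (Hm : forall x y, fB (Bmul x y) = mul (fB x) (fB y)).
  { intros x y. destruct (cls_surj x) as [u ->], (cls_surj y) as [v ->].
    rewrite Bmul_cls, !fB_cls. apply g_app. }
  assert (HT : forall x, fB (BT x) = T1 (fB x)).
  { intros x. destruct (cls_surj x) as [u ->]. rewrite BT_cls, !fB_cls. apply g_shift. }
  assert (H1 : fB Bone = one) by (unfold Bone; rewrite fB_cls; reflexivity).
  assert (Hs : fB Bsig = sig) by (unfold Bsig; rewrite fB_cls; simpl; apply H1r).
  assert (Hsb : fB Bsigb = sigb) by (unfold Bsigb; rewrite fB_cls; simpl; apply H1r).
  repeat split; auto.
  induction 1.
  - rewrite !Hm. apply Hsy, Hcj. rewrite <- Hm, Binv_r. exact H1.
  - rewrite Hm, HT, Hs. apply Hst.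
  - rewrite Hm, HT, Hsb. apply Hsti.
  - apply Hrf.
  - auto.
  - eauto.
Qed.

Lemma unique_h (h : Binf -> St) :
  h Bone = one /\ h Bsig = sig /\ h Bsigb = sigb /\
  (forall x y, h (Bmul x y) = mul (h x) (h y)) /\
  (forall x, h (BT x) = T1 (h x)) /\
  (forall x y, Beqv x y -> eqv (h x) (h y)) -> forall w, h (cls w) = g w.
Proof. intros (H1 & Hs & Hsb & Hm & HT & _).
  assert (Hit : forall n x, h (it BT n x) = it T1 n (h x)).
  { induction n; simpl; intros; auto. rewrite HT; congruence. }
  induction w as [|[i b] w IH]. exact H1.
  change ((i, b) :: w) with ([(i,b)] ++ w). rewrite <- Bmul_cls, Hm, IH.
  simpl. f_equal. rewrite cls_iter, Hit. unfold gl; simpl. destruct b; [change (cls [(0,true)]) with Bsig | change (cls [(0,false)]) with Bsigb]; congruence. Qed.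

End Univ.

Theorem theorem6p4 :
  link_axioms Bmul BT Beqv Bone Bsig Bsigb /\
  (forall x : Binf, exists t : term, eval_term Bmul BT Bone Bsig Bsigb t = x) /\
  (forall (S : Type) (mul : S -> S -> S) (T1 : S -> S) (eqv : S -> S -> Prop)
     (one sig sigb : S),
     link_axioms mul T1 eqv one sig sigb ->
     exists! f : Binf -> S,
       f Bone = one /\ f Bsig = sig /\ f Bsigb = sigb /\
       (forall x y, f (Bmul x y) = mul (f x) (f y)) /\
       (forall x, f (BT x) = T1 (f x)) /\
       (forall x y, Beqv x y -> eqv (f x) (f y))).
Proof.
  split; [apply link_B|split].
  - intro x. destruct (cls_surj x) as [w ->]. exists (tw w). apply eval_tw.
  - intros S mul T1 eqv one sig sigb HL.
    exists (fB S mul T1 one sig sigb). split.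
    + apply fB_props; auto.
    + intros h Hh. apply functional_extensionality; intro b.
      destruct (cls_surj b) as [w ->]. rewrite (fB_cls S mul T1 eqv one sig sigb HL).
      symmetry. eapply unique_h; eauto.
Qed.
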